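(* Let $G$ be the non-abelian group of order $27$ and exponent $3$. Every sequence of length $7$ over $G$ contains a non-empty product-one subsequence. Consequently $\mathsf{d}(G)=6$.
   Context: A sequence over $G$ is a finite unordered list (multiset) of elements of $G$; a subsequence is a sub-multiset; a non-empty sequence is product-one if some ordering of its terms has product $1$. The small Davenport constant $\mathsf{d}(G)$ is the maximal length of a sequence over $G$ having no non-empty product-one subsequence. *)

(* Defs.v *)
From mathcomp Require Import all_boot all_fingroup.
Set Implicit Arguments. Unset Strict Implicit. Unset Printing Implicit Defensive.

(* A sequence over gT is a finite list; its order is irrelevant for the
   notions below (all of them are invariant under permutation). *)

Definition product_one (gT : finGroupType) (s : seq gT) : Prop :=
  s <> [::] /\ exists t : seq gT, perm_eq t s /\ (\prod_(x <- t) x)%g = 1%g.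

Definition has_product_one_subseq (gT : finGroupType) (s : seq gT) : Prop :=
  exists m : bitseq, product_one (mask m s).

Definition product_one_free (gT : finGroupType) (s : seq gT) : Prop :=
  ~ has_product_one_subseq s.

Definition is_small_davenport (gT : finGroupType) (n : nat) : Prop :=
  (exists s : seq gT, size s = n /\ product_one_free s) /\
  (forall s : seq gT, product_one_free s -> size s <= n).

(* Main.v *)
Require Import Defs.
From HB Require Import structures.
From mathcomp Require Import all_boot all_fingroup all_solvable.
Set Implicit Arguments. Unset Strict Implicit. Unset Printing Implicit Defensive.
Inductive tri := T0 | T1 | T2.
Definition teq a b := match a, b with T0,T0|T1,T1|T2,T2 => true | _,_ => false end.
Lemma teqP : Equality.axiom teq.
Proof. by case; case; constructor. Qed.
HB.instance Definition _ := hasDecEq.Build tri teqP.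

Definition tadd a b := match a, b with
 | T0, x => x | x, T0 => x | T1, T1 => T2 | T1, T2 => T0 | T2, T1 => T0 | T2, T2 => T1 end.
Definition tmul a b := match a, b with
 | T0, _ => T0 | _, T0 => T0 | T1, x => x | x, T1 => x | T2, T2 => T1 end.
Definition elt := (tri * tri * tri)%type.
Definition eone : elt := (T0,T0,T0).
Definition emul (u v : elt) : elt :=
  let: (a,b,c) := u in let: (d,e,f) := v in
  (tadd a d, tadd b e, tadd (tadd c f) (tmul T2 (tmul d b))).
Definition einv (u : elt) : elt := emul u u.
Definition t2n t := match t with T0 => 0 | T1 => 1 | T2 => 2 end.

Lemma t2n_add a b : t2n (tadd a b) = (t2n a + t2n b) %% 3.
Proof. by case: a; case: b. Qed.
Lemma t2n_z c f d b :
  t2n (tadd (tadd c f) (tmul T2 (tmul d b))) = (t2n c + t2n f + 2 * (t2n d * t2n b)) %% 3.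
Proof. by case: c; case: f; case: d; case: b. Qed.


Definition idx (u : elt) := let: (a,b,c) := u in t2n a + 3 * t2n b + 9 * t2n c.
Definition tris := [:: T0; T1; T2].
Definition elts : seq elt := flatten [seq [seq (a,b,c) | b <- tris, a <- tris] | c <- tris].
Lemma mem_elts u : u \in elts.
Proof. by case: u => [[a b] c]; case: a; case: b; case: c. Qed.
Lemma size_elts : size elts = 27. Proof. by []. Qed.

Inductive s3 (A : Type) := S3 of A & A & A.
Arguments S3 {A}.
Definition get3 {A} (i : tri) (s : s3 A) := let: S3 x y z := s in match i with T0 => x | T1 => y | T2 => z end.
Definition upd3 {A} (i : tri) (f : A -> A) (s : s3 A) := let: S3 x y z := s in
  match i with T0 => S3 (f x) y z | T1 => S3 x (f y) z | T2 => S3 x y (f z) end.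
Lemma get3_upd3 A i j f (s : s3 A) : get3 i (upd3 j f s) = if i == j then f (get3 i s) else get3 i s.
Proof. by case: s => a b c; case: i; case: j. Qed.
Definition eset := s3 (s3 (s3 bool)).
Definition c3 {A} (x : A) := S3 x x x.
Definition eempty : eset := c3 (c3 (c3 false)).
Definition emem (u : elt) (S : eset) := let: (a,b,c) := u in get3 c (get3 b (get3 a S)).
Definition eins (u : elt) (S : eset) := let: (a,b,c) := u in upd3 a (upd3 b (upd3 c (fun _ => true))) S.
Lemma emem_ins v u S : emem v (eins u S) = (v == u) || emem v S.
Proof.
case: v => [[a' b'] c']; case: u => [[a b] c] /=.
rewrite !xpair_eqE get3_upd3; case: (a' == a) => /=; rewrite ?get3_upd3; case: (b' == b) => /=;
  rewrite ?get3_upd3; case: (c' == c). all: try done.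
Qed.
Lemma emem_empty v : emem v eempty = false.
Proof. by case: v => [[a b] c]; case: a; case: b; case: c. Qed.

Definition eeq (u v : elt) := let: (a,b,c) := u in let: (d,e,f) := v in
  if teq a d then if teq b e then teq c f else false else false.
Fixpoint picks2 (r : seq elt) : seq (elt * seq elt) :=
  match r with [::] => [::] | a :: r' => (a, r') :: [seq (p.1, a :: p.2) | p <- picks2 r' & ~~ eeq p.1 a] end.
Fixpoint arr2 (n : nat) (p : elt) (r : seq elt) (S : eset) : eset :=
  match n with 0 => eins p S | n'.+1 =>
   foldl (fun S q => arr2 n' (emul p q.1) q.2 S) (eins p S) (picks2 r) end.
Definition pset2 r := arr2 (size r) eone r eempty.
Definition head_idx (r : seq elt) := if r is a :: _ then idx a else 26.
Fixpoint allb (f : elt -> bool) (s : seq elt) : bool :=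
  if s is a :: s' then (if f a then allb f s' else false) else true.
Fixpoint check (r : seq elt) (d : nat) : bool :=
  match d with 0 => false | d'.+1 =>
   (fun P => allb (fun g => if head_idx r < idx g then true else
       if emem (einv g) P then true else check (g :: r) d') elts) (pset2 r) end.

Lemma allbE f s : allb f s = all f s.
Proof. by elim: s => //= a s IH; case: (f a). Qed.

Definition subm (T : eqType) (t s : seq T) := forall x, count_mem x t <= count_mem x s.

Lemma picks2_sound r q : q \in picks2 r -> perm_eq r (q.1 :: q.2).
Proof.
elim: r q => //= a r IH q; rewrite inE => /orP[/eqP -> //|].
case/mapP=> p; rewrite mem_filter => /andP[_ /IH pp] -> /=.
apply/seq.permP => P /=; rewrite (seq.permP pp) /=.
by rewrite addnCA.
Qed.

Lemma arr_sound n p r S v : emem v (arr2 n p r S) ->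
  emem v S \/ exists t, subm t r /\ v = foldl emul p t.
Proof.
elim: n p r S => [|n IH] p r S /=.
  rewrite emem_ins => /orP[/eqP -> |]; last by left.
  by right; exists [::]; split.
have key : forall qs S0, (forall q, q \in qs -> perm_eq r (q.1 :: q.2)) ->
    emem v (foldl (fun S q => arr2 n (emul p q.1) q.2 S) S0 qs) ->
    emem v S0 \/ exists t, subm t r /\ v = foldl emul p t.
  elim=> [|q qs IHq] S0 hq //=; first by left.
  move=> h; have hq' : forall q', q' \in qs -> perm_eq r (q'.1 :: q'.2).
    by move=> q' hq'; apply: hq; rewrite inE hq' orbT.
  case: (IHq _ hq' h) => [|]; last by right.
  move/IH => [|[t [st ->]]]; first by left.
  right; exists (q.1 :: t); split => //.
  move=> x; have pq := hq q (mem_head _ _).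
  by rewrite (seq.permP pq) /= leq_add2l.
move=> h; case: (key _ _ (@picks2_sound r) h).
- rewrite emem_ins => /orP[/eqP -> |]; last by left.
  by right; exists [::]; split.
- by right.
Qed.

Lemma subm_refl (T : eqType) (s : seq T) : subm s s. Proof. by []. Qed.
Lemma subm_catl (T : eqType) (t s1 s2 : seq T) : subm t s2 -> subm t (s1 ++ s2).
Proof. by move=> h x; rewrite count_cat (leq_trans (h x)) // leq_addl. Qed.
Lemma subm_catr (T : eqType) (t s1 s2 : seq T) : subm t s1 -> subm t (s1 ++ s2).
Proof. by move=> h x; rewrite count_cat (leq_trans (h x)) // leq_addr. Qed.
Lemma subm_cons (T : eqType) (a : T) t s : subm t s -> subm (a :: t) (a :: s).
Proof. by move=> h x /=; rewrite leq_add2l. Qed.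
Lemma subm_perm (T : eqType) (t s s' : seq T) : perm_eq s s' -> subm t s -> subm t s'.
Proof. by move=> /seq.permP p h x; rewrite -p. Qed.
Lemma subm_map (T U : eqType) (f : T -> U) t s : subm t s -> subm (map f t) (map f s).
Proof.
move/count_maskP => [m _ pm] x.
by rewrite (seq.permP (perm_map f pm)) map_mask leq_count_mask.
Qed.
Lemma subm_size (T : eqType) (t s : seq T) : subm t s -> size t <= size s.
Proof.
move/count_maskP => [m _ pm]; rewrite (perm_size pm).
exact: size_subseq (mask_subseq m s).
Qed.
Lemma subm_mem (T : eqType) (t s : seq T) x : subm t s -> x \in t -> x \in s.
Proof. by move=> h; rewrite -!has_pred1 !has_count => /leq_trans; apply. Qed.

Lemma has_poP (gT : finGroupType) (s : seq gT) : has_product_one_subseq s <->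
  exists t, [/\ t != [::], subm t s & (\prod_(g <- t) g)%g = 1%g].
Proof.
split.
  case=> m [nz [t [pt pr]]]; exists t; split => //.
  - apply/eqP => t0; apply: nz; apply: size0nil; by rewrite -(perm_size pt) t0.
  - by move=> x; rewrite (seq.permP pt) leq_count_mask.
case=> t [nz st pr]; have [m _ pm] := (count_maskP t s).1 st.
exists m; split; last by exists t.
move=> m0; move: pm; rewrite m0 => /perm_size; case: t nz {st pr} => //.
Qed.

Lemma has_po_perm (gT : finGroupType) (s s' : seq gT) : perm_eq s s' ->
  has_product_one_subseq s -> has_product_one_subseq s'.
Proof.
move=> p /has_poP [t [nz st pr]]; apply/has_poP; exists t; split => //.
exact: subm_perm p st.
Qed.

Lemma has_po_cat (gT : finGroupType) (s1 s2 : seq gT) :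
  has_product_one_subseq s1 -> has_product_one_subseq (s1 ++ s2).
Proof.
move=> /has_poP [t [nz st pr]]; apply/has_poP; exists t; split => //.
exact: subm_catr.
Qed.

Local Open Scope group_scope.

Lemma comm_pow (gT : finGroupType) (x y w : gT) (cwx : commute w x) (cwy : commute w y)
  (hyx : y * x = x * y * w) (i j : nat) : y ^+ j * x ^+ i = x ^+ i * y ^+ j * w ^+ (i * j).
Proof.
have h1 : forall k, y * x ^+ k = x ^+ k * y * w ^+ k.
  elim; first by rewrite !expg0 !mulg1 mul1g.
  move=> k IH.
  rewrite expgSr mulgA IH -!mulgA -(commuteX k (commute_sym cwx)).
  by rewrite (mulgA y) hyx -!mulgA expgS.
elim: j => [|n IH]; first by rewrite !expg0 muln0 expg0 !mulg1 mul1g.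
rewrite expgS -mulgA IH !mulgA h1 mulnS expgD.
rewrite -!mulgA; congr (_ * _).
by rewrite (mulgA (w ^+ i)) (commuteX2 i n cwy) -mulgA.
Qed.

Definition fmap (gT : finGroupType) (x y : gT) (u : elt) : gT :=
  let: (a,b,c) := u in x ^+ t2n a * y ^+ t2n b * [~ x, y] ^+ t2n c.

Lemma fmapM (gT : finGroupType) (x y : gT)
  (Hexp : forall g : gT, g ^+ 3 = 1) (cx : commute [~ x, y] x) (cy : commute [~ x, y] y) u v :
  fmap x y (emul u v) = fmap x y u * fmap x y v.
Proof.
set z := [~ x, y] in cx cy *.
have hz : z^-1 = z ^+ 2.
  by apply: (mulIg z); rewrite mulVg -expgSr Hexp.
have hyx : y * x = x * y * z ^+ 2.
  by rewrite -hz (commgC x y) -/z mulgK.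
have cw1 : commute (z ^+ 2) x := commute_sym (commuteX 2 (commute_sym cx)).
have cw2 : commute (z ^+ 2) y := commute_sym (commuteX 2 (commute_sym cy)).
case: u => [[a b] c]; case: v => [[d e] f] /=.
rewrite t2n_add t2n_add t2n_z !expg_mod ?Hexp //.
set A := t2n a; set B := t2n b; set C := t2n c; set D := t2n d; set E := t2n e; set F := t2n f.
rewrite !expgD -/z -!mulgA; congr (_ * _).
rewrite (mulgA (z ^+ C) (x ^+ D)) (commuteX2 C D cx) -mulgA (mulgA (z ^+ C) (y ^+ E)) (commuteX2 C E cy) -mulgA.
rewrite (mulgA (y ^+ B) (x ^+ D)) (comm_pow cw1 cw2 hyx) -!mulgA; congr (_ * _).
rewrite (mulgA ((z ^+ 2) ^+ (D * B)) (y ^+ E)) (commuteX2 (D * B) E cw2) -!mulgA; congr (_ * _).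
congr (_ * _).
rewrite -expgM -!expgD; congr (_ ^+ _).
by rewrite mulnC addn0 addnA addnC mul2n -addnn.
Qed.

Lemma fmap1 (gT : finGroupType) (x y : gT) : fmap x y eone = 1.
Proof. by rewrite /= !expg0 !mulg1. Qed.

Lemma emul_inv g : emul g (einv g) = eone.
Proof. by case: g => [[a b] c]; case: a; case: b; case: c. Qed.

Lemma idx_le g : (idx g <= 26)%N.
Proof. by case: g => [[a b] c]; case: a; case: b; case: c. Qed.

Definition le : rel elt := fun a b => (idx a <= idx b)%N.
Lemma le_trans : transitive le.
Proof. by move=> a b c; apply: leq_trans. Qed.
Lemma le_total : total le.
Proof. by move=> a b; apply: leq_total. Qed.

Lemma checkS r d : check r d.+1 = allb (fun g => if (head_idx r < idx g)%N then true else
  if emem (einv g) (pset2 r) then true else check (g :: r) d) elts.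
Proof. by []. Qed.

Section Sound.
Variables (gT : finGroupType) (x y : gT).
Hypotheses (Hexp : forall g : gT, g ^+ 3 = 1) (cx : commute [~ x, y] x) (cy : commute [~ x, y] y).

Lemma fmap_foldl p t :
  fmap x y (foldl emul p t) = fmap x y p * \prod_(g <- map (fmap x y) t) g.
Proof.
elim: t p => [|a t IH] p /=; first by rewrite big_nil mulg1.
by rewrite IH fmapM // big_cons mulgA.
Qed.

Lemma check_sound d r : check r d -> forall e, size e = d -> sorted le (e ++ r) ->
  has_product_one_subseq (map (fmap x y) (e ++ r)).
Proof.
elim: d r => [|d IH] r; first by [].
rewrite checkS allbE => /allP hall e; case/lastP: e => [|e' g] //.
rewrite size_rcons => -[se] srt; rewrite cat_rcons in srt *.
have sgr : sorted le (g :: r).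
  by apply: (subseq_sorted le_trans _ srt); exact: suffix_subseq.
move: (hall g (mem_elts g)).
have -> : (head_idx r < idx g)%N = false.
  case: r sgr {srt hall} => [|h r] /=; first by rewrite ltnNge idx_le.
  by case/andP => hle _; rewrite ltnNge; move: hle; rewrite /le => ->.
case hm : (emem (einv g) (pset2 r)); last by move=> hc; exact: IH hc e' se srt.
move=> _; case: (arr_sound hm) => [|[t [st et]]]; first by rewrite emem_empty.
apply/has_poP; exists (fmap x y g :: map (fmap x y) t); split => //.
  rewrite map_cat; apply: subm_catl => /=; apply: subm_cons; exact: subm_map.
rewrite big_cons.
have -> : \prod_(i <- map (fmap x y) t) i = fmap x y (einv g).
  by rewrite et fmap_foldl fmap1 mul1g.
by rewrite -fmapM // emul_inv fmap1.
Qed.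

End Sound.

Lemma gens (gT : finGroupType)
  (Hcard : #|[set: gT]| = 27)
  (Hnonab : ~~ abelian [set: gT])
  (Hexp : forall x : gT, (x ^+ 3 = 1)%g) :
  exists x y : gT, [/\ <[x]> <*> <[y]> = [set: gT], commute [~ x, y] x & commute [~ x, y] y].
Proof.
have p3 : prime 3 by [].
have pG : 3.-group [set: gT]%G by rewrite /pgroup /= Hcard.
have esG : extraspecial [set: gT]%G.
  by apply: (p3group_extraspecial (p := 3)) => //=; rewrite Hcard.
have eG : exponent [set: gT]%G %| 3 by apply/exponentP => x _; exact: Hexp.
have iso1 := isog_pX1p2 p3 esG eG (etrans Hcard (erefl _)).
have iso2 := isoGrp_trans iso1 (Grp_pX1p2 p3).
have := isoGrp_hom iso2.
case/existsP=> [[x y]] /=; case/eqP=> defG _ _ /eqP/commgP c1 /eqP/commgP c2.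
by exists x, y; split.
Qed.

Lemma fmap_surj (gT : finGroupType) (x y : gT) (Hexp : forall g : gT, g ^+ 3 = 1)
  (cx : commute [~ x, y] x) (cy : commute [~ x, y] y)
  (defG : <[x]> <*> <[y]> = [set: gT]) (g : gT) : g \in map (fmap x y) elts.
Proof.
pose Im := [set g | g \in map (fmap x y) elts].
have gIm : group_set Im.
  apply/group_setP; split.
    by rewrite in_set; apply/mapP; exists eone; [exact: mem_elts | rewrite fmap1].
  move=> a b; rewrite !in_set => /mapP[u _ ->] /mapP[v _ ->].
  by apply/mapP; exists (emul u v); [exact: mem_elts | rewrite fmapM].
have : [set: gT] \subset Group gIm.
  rewrite -defG join_subG !cycle_subG !in_set; apply/andP; split; apply/mapP.
    by exists (T1, T0, T0); [exact: mem_elts | rewrite /= expg1 !expg0 !mulg1].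
  by exists (T0, T1, T0); [exact: mem_elts | rewrite /= expg1 !expg0 mul1g mulg1].
by move/subsetP/(_ g (in_setT g)); rewrite in_set.
Qed.

Lemma inj_of_uniq (T U : eqType) (f : T -> U) (s : seq T) :
  uniq (map f s) -> {in s &, injective f}.
Proof.
elim: s => //= a s IH /andP[nfa us] u v; rewrite !inE.
case/orP=> [/eqP->|us'] /orP[/eqP->|vs] e //.
- by move: nfa; rewrite e map_f.
- by move: nfa; rewrite -e map_f.
- exact: IH.
Qed.

Definition r6 : seq elt := [:: (T1,T0,T0); (T1,T0,T0); (T2,T1,T0); (T2,T1,T0); (T1,T2,T0); (T1,T2,T0)].
Definition alph : seq elt := [:: (T1,T0,T0); (T2,T1,T0); (T1,T2,T0)].
Fixpoint words (k : nat) : seq (seq elt) :=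
  if k is k'.+1 then [seq a :: w | a <- alph, w <- words k'] else [:: [::]].
Definition r6ok := all (fun k => all (fun w =>
  all (fun a => (count_mem a w <= count_mem a r6)%N) alph ==> (foldl emul eone w != eone))
  (words k)) (iota 1 6).
Lemma r6ok_true : r6ok. Proof. by vm_compute. Qed.

Lemma mem_words w : all (mem alph) w -> w \in words (size w).
Proof.
elim: w => [|a w IH]; first by [].
case/andP => ha hw.
change (a :: w \in [seq b :: v | b <- alph, v <- words (size w)]).
by apply: allpairs_f => //; exact: IH.
Qed.

Lemma r6_free w : w != [::] -> subm w r6 -> foldl emul eone w != eone.
Proof.
move=> nz sw.
have hsz : (size w <= 6)%N by exact: (subm_size sw).
have ha : all (mem alph) w.
  have sub : all (mem alph) r6 by [].
  apply/allP => a aw; exact: (allP sub a (subm_mem sw aw)).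
have hk : size w \in iota 1 6.
  by rewrite mem_iota; case: w nz {sw ha} hsz.
move: r6ok_true => /allP /(_ _ hk) /allP /(_ _ (mem_words ha)) /implyP; apply.
by apply/allP => a _; exact: sw.
Qed.

Local Close Scope group_scope.

Lemma check7 : check [::] 7. Proof. by vm_compute. Qed.

Theorem theorem3p1 (gT : finGroupType)
  (Hcard : #|[set: gT]| = 27)
  (Hnonab : ~~ abelian [set: gT])
  (Hexp : forall x : gT, (x ^+ 3 = 1)%g) :
  (forall s : seq gT, size s = 7 -> has_product_one_subseq s) /\
  is_small_davenport gT 6.
Proof.
have [x [y [defG cx cy]]] := gens Hcard Hnonab Hexp.
have surj := fmap_surj Hexp cx cy defG.
have part1 : forall s : seq gT, size s = 7 -> has_product_one_subseq s.
  move=> s hs.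
  have [u hu] : exists u, map (fmap x y) u = s.
    elim: s {hs} => [|g s [u hu]]; first by exists [::].
    by case/mapP: (surj g) => e _ ->; exists (e :: u); rewrite /= hu.
  have pv : perm_eq (sort le u) u by rewrite perm_sort.
  have sv : sorted le (sort le u) := sort_sorted le_total u.
  have szv : size (sort le u) = 7 by rewrite (perm_size pv) -hs -hu size_map.
  have := check_sound Hexp cx cy check7 szv; rewrite cats0 => /(_ sv) hv.
  by apply: has_po_perm hv; rewrite -hu; exact: perm_map.
split => //; split.
  exists (map (fmap x y) r6); split; first by rewrite size_map.
  have us : uniq (map (fmap x y) elts).
    apply: (leq_size_uniq (enum_uniq (pred_of_simpl (@predT gT)))).
      by move=> g _; exact: surj.
    by rewrite size_map size_elts -cardE -cardsT Hcard.
  have inj : injective (fmap x y).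
    by move=> u v e; apply: (inj_of_uniq us) => //; exact: mem_elts.
  pose finv g := nth eone elts (index g (map (fmap x y) elts)).
  have ff g : fmap x y (finv g) = g.
    rewrite /finv -(nth_map eone (fmap x y eone)) ?nth_index ?surj //.
    by rewrite -(size_map (fmap x y)) index_mem.
  have fi u : finv (fmap x y u) = u by apply: inj; rewrite ff.
  move=> /has_poP [t [nz st pr]].
  have ht : t = map (fmap x y) (map finv t).
    by rewrite -map_comp map_id_in // => g _ /=; rewrite ff.
  have st' : subm (map finv t) r6.
    have := subm_map finv st; rewrite -map_comp map_id_in //.
    by move=> u _ /=; rewrite fi.
  have nz' : map finv t != [::] by case: (t) nz.
  move: (r6_free nz' st'); rewrite -(inj_eq inj) fmap_foldl // fmap1 mul1g -ht pr.
  by rewrite eqxx.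
move=> s hfree; rewrite leqNgt; apply/negP => hs; apply: hfree.
rewrite -(cat_take_drop 7 s); apply: has_po_cat; apply: part1.
by rewrite size_take; case: ltnP => // h; apply/eqP; rewrite eqn_leq h.
Qed.
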